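(* Let $n=2$, $m=1$, $v_1(x)=x$ and $v_2(x)=\sqrt{2x}$ for $x\ge0$. Then for every $\rho\in(0,1)$ there exist no allocation $\mathbf{x}\in\Psi(\rho)$ and pricing rule $p:\mathbb{R}_{\ge0}\to\mathbb{R}_{\ge0}$ such that $(\mathbf{x},p)$ is a Walrasian equilibrium.
   Context: Single good of supply 1; an allocation is $(x_1,x_2)\in\mathbb{R}^2_{\ge0}$ with $x_1+x_2\le1$. $\Psi(\rho)$ is the set of allocations maximizing $(v_1(x_1)^\rho+v_2(x_2)^\rho)^{1/\rho}$. Quasilinear demand set $D_i(p)=\arg\max_{y\ge0}(v_i(y)-p(y))$. $(\mathbf{x},p)$ is a Walrasian equilibrium if $x_i\in D_i(p)$ for $i=1,2$, $x_1+x_2\le1$, and $x_1+x_2=1$ if the good has nonzero cost (some $y$ has $p(y)>0$). *)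

(* Defs.v *)
From HB Require Import structures.
From mathcomp Require Import all_boot all_order all_algebra.
From mathcomp Require Import all_classical all_reals exp.
Set Implicit Arguments. Unset Strict Implicit. Unset Printing Implicit Defensive.
Import Order.TTheory GRing.Theory Num.Theory.
Local Open Scope ring_scope.

Section Market.
Variable R : realType.

Definition allocation (x1 x2 : R) : Prop := 0 <= x1 /\ 0 <= x2 /\ x1 + x2 <= 1.

Definition rho_welfare (v1 v2 : R -> R) (rho x1 x2 : R) : R :=
  powR (powR (v1 x1) rho + powR (v2 x2) rho) (rho^-1).

Definition Psi (v1 v2 : R -> R) (rho x1 x2 : R) : Prop :=
  allocation x1 x2 /\
  forall y1 y2, allocation y1 y2 ->
    rho_welfare v1 v2 rho y1 y2 <= rho_welfare v1 v2 rho x1 x2.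

Definition in_demand (v p : R -> R) (y : R) : Prop :=
  0 <= y /\ forall z, 0 <= z -> v z - p z <= v y - p y.

(* pricing rule p : R_{>=0} -> R_{>=0} (values off the domain are irrelevant) *)
Definition pricing_rule (p : R -> R) : Prop := forall y, 0 <= y -> 0 <= p y.

Definition walrasian (v1 v2 p : R -> R) (x1 x2 : R) : Prop :=
  in_demand v1 p x1 /\ in_demand v2 p x2 /\ x1 + x2 <= 1 /\
  ((exists y, 0 <= y /\ 0 < p y) -> x1 + x2 = 1).

Definition v_one (x : R) : R := x.
Definition v_two (x : R) : R := Num.sqrt (2 * x).

End Market.

(* Main.v *)
Require Import Defs.
From HB Require Import structures.
From mathcomp Require Import all_boot all_order all_algebra.
From mathcomp Require Import all_classical all_reals exp.
From mathcomp Require Import ring lra.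
Import Order.TTheory GRing.Theory Num.Theory.
Local Open Scope ring_scope.

Lemma bern (R : realType) (r t : R) : 0 < r -> r < 1 -> 0 <= t ->
  powR t r <= r * t + (1 - r).
Proof.
move=> r0 r1 t0.
have q0 : 0 < 1 - r by rewrite subr_gt0.
have i1 : 0 < r^-1 by rewrite invr_gt0.
have i2 : 0 < (1 - r)^-1 by rewrite invr_gt0.
have := @conjugate_powR R (powR t r) 1 r^-1 (1 - r)^-1 (powR_ge0 _ _) ler01 i1 i2.
rewrite !invrK -powRrM mulfV ?gt_eqF // powRr1 // powR1 mulr1.
move=> H. have := H ltac:(lra).
rewrite /=. lra.
Qed.

Lemma tang (R : realType) (r u c : R) : 0 < r -> r < 1 -> 0 <= u -> 0 < c ->
  powR u r <= powR c r * (r * (u / c) + (1 - r)).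
Proof.
move=> r0 r1 u0 c0.
have -> : u = c * (u / c) by rewrite mulrCA mulfV ?gt_eqF // mulr1.
have uc : 0 <= u / c by apply: divr_ge0 => //; exact: ltW.
rewrite powRM //; last exact: ltW.
have -> : c * (u / c) / c = u / c by field; rewrite gt_eqF.
apply: ler_wpM2l; first exact: powR_ge0.
exact: bern.
Qed.

Lemma final_ineq (R : realFieldType) (r A B f1 f2 x1 y1 b c : R) :
  0 < r -> r < 1 -> 0 < A -> 0 < B -> 0 < y1 -> 0 < c -> c < b ->
  x1 = 1 - b^+2/2 -> y1 = 1 - c^+2/2 ->
  r + (1 - r) * (y1 / c) < (b + c) / 2 ->
  f1 <= A * (r * (x1 / y1) + (1 - r)) ->
  f2 <= B * (r * (b / c) + (1 - r)) ->
  B <= A * (r * (c / y1) + (1 - r)) -> f1 + f2 < A + B.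
Proof.
move=> r0 r1 A0 B0 y0 c0 cb hx hy G T1 T2 T3.
have bc0 : 0 <= b / c - 1 by rewrite subr_ge0 ler_pdivlMr // mul1r ltW.
have K1 : B * (b / c - 1) <= A * (r * (c / y1) + (1 - r)) * (b / c - 1).
  exact: ler_wpM2r.
have K2 : A * (r * (c / y1) + (1 - r)) * (b / c - 1) + A * (x1 / y1 - 1)
   = A * (b - c) / y1 * (r + (1 - r) * (y1 / c) - (b + c) / 2).
  rewrite hx hy; rewrite hy in y0; field.
  by rewrite gt_eqF //= gt_eqF //; lra.
have K3 : A * (b - c) / y1 * (r + (1 - r) * (y1 / c) - (b + c) / 2) < 0.
  rewrite pmulr_rlt0; first lra.
  by apply: divr_gt0 => //; apply: mulr_gt0; lra.
have E : f1 + f2 - A - B <= r * (B * (b / c - 1) + A * (x1 / y1 - 1)).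
  lra.
have : r * (B * (b / c - 1) + A * (x1 / y1 - 1)) < 0.
  rewrite pmulr_rlt0 //. lra.
lra.
Qed.

Theorem mainTheorem12 (R : realType) (rho : R) :
  0 < rho -> rho < 1 ->
  ~ (exists (x1 x2 : R) (p : R -> R),
       Psi (@v_one R) (@v_two R) rho x1 x2 /\ pricing_rule p /\
       walrasian (@v_one R) (@v_two R) p x1 x2).
Proof.
move=> r0 r1 [x1 [x2 [p [[[h1 [h2 h12]] Hopt] [Hp [[_ D1] [[_ D2] [_ Hsum]]]]]]]].
have hs : x1 + x2 = 1.
  apply: Hsum; exists (x1 + 1); split; first lra.
  have := D1 (x1 + 1) ltac:(lra); have := Hp x1 h1; rewrite /v_one; lra.
have e1 := D1 x2 h2; have e2 := D2 x1 h1; rewrite /v_one /v_two in e1 e2.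
have a0 : 0 <= Num.sqrt (2 * x1) := sqrtr_ge0 _.
have b0 : 0 <= Num.sqrt (2 * x2) := sqrtr_ge0 _.
have ha : Num.sqrt (2 * x1) ^+ 2 = 2 * x1 by rewrite sqr_sqrtr //; lra.
have hb : Num.sqrt (2 * x2) ^+ 2 = 2 * x2 by rewrite sqr_sqrtr //; lra.
move: a0 b0 ha hb e1 e2.
set a := Num.sqrt (2 * x1); set b := Num.sqrt (2 * x2) => a0 b0 ha hb e1 e2.
have b1 : 1 <= b.
  rewrite leNgt; apply/negP => bl1.
  have bb : b * b < 1 by have := ltr_pM b0 b0 bl1 bl1; rewrite mulr1.
  have aa : 1 < a * a by rewrite -expr2 ha; rewrite -expr2 hb in bb; lra.
  have a1 : 1 < a.
    rewrite ltNge; apply/negP => al; have := ler_pM a0 a0 al al; rewrite mulr1; lra.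
  rewrite -!expr2 in bb aa.
  have hab : (a - b) * (a + b) = 2 * x1 - 2 * x2 by rewrite -hb -ha; ring.
  have s2 : 2 <= a + b.
    have : (a - b) * 2 <= (a - b) * (a + b) by lra.
    rewrite ler_pM2l; [done | lra].
  have : (a - b) ^+ 2 = 2 * (a ^+ 2 + b ^+ 2) - (a + b) ^+ 2 by ring.
  rewrite ha hb.
  have : 2 * 2 <= (a + b) ^+ 2.
    by rewrite expr2; apply: ler_pM => //; lra.
  have : 0 < (a - b) ^+ 2 by apply: exprn_gt0; lra.
  lra.
pose t := 1 - rho; pose c := 1 - t / 10; pose y2 := c ^+ 2 / 2; pose y1 := 1 - y2.
have t0 : 0 < t by rewrite /t; lra.
have c0 : 9 / 10 <= c by rewrite /c /t; lra.
have c1 : c < 1 by rewrite /c; lra.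
have cc0 : 81 / 100 <= c ^+ 2.
  have -> : 81 / 100 = 9 / 10 * (9 / 10) :> R by field.
  by rewrite expr2; apply: ler_pM => //; lra.
have cc1 : c ^+ 2 <= 1.
  by rewrite expr2 -[1](mulr1 1); apply: ler_pM => //; lra.
have y20 : 0 <= y2 by rewrite /y2; lra.
have y21 : y2 <= 1 / 2 by rewrite /y2; lra.
have Hy := Hopt y1 y2 ltac:(rewrite /allocation /y1; lra).
move: Hy; apply/negP; rewrite -ltNge.
rewrite /rho_welfare /v_one /v_two.
have -> : Num.sqrt (2 * y2) = c.
  by rewrite /y2 mulrC divfK ?sqrtr_sqr ?ger0_norm //; lra.
have i0 : 0 < rho^-1 by rewrite invr_gt0.
apply: gt0_ltr_powR => //; rewrite ?nnegrE ?addr_ge0 ?powR_ge0 //.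
have hx1 : x1 = 1 - b ^+ 2 / 2 by rewrite hb; lra.
have y1p : 0 < y1 by rewrite /y1; lra.
have cp : 0 < c by lra.
apply: (@final_ineq _ rho (powR y1 rho) (powR c rho) _ _ x1 y1 b c) => //.
- exact: powR_gt0.
- exact: powR_gt0.
- lra.
- have q : y1 / c <= 2 / 3.
    rewrite ler_pdivrMr //. rewrite /y1 /y2. lra.
  have : (1 - rho) * (y1 / c) <= (1 - rho) * (2 / 3) by apply: ler_wpM2l; lra.
  rewrite /c /t in c0 c1 *. lra.
- exact: tang.
- exact: tang.
- apply: tang => //; lra.
Qed.
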